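(* Let $I(z)$ be a nonzero polynomial solution of the KZ system over $\mathbb{F}_p$ with $\mathrm{id}$-leading term $C z_1^{d_1}\cdots z_n^{d_n}$, $C\in\mathbb{F}_p^n$. Then $$\sum_{j=1}^nM_jC_j=0,\qquad \Omega^M_jC=d_jC\ \ (j=1,\dots,n-1),\qquad d_n\equiv0\pmod p,$$ with equalities in $\mathbb{F}_p$.
   Context: Let $p,q$ be primes and $n$ a positive integer with $p>n\ge2$, $p>q$. Fix positive integers $m_1,\dots,m_n<q$; $M_i$ is the least positive integer with $M_i\equiv -m_iq^{-1}\pmod p$. For $i\ne j$ let $\Omega_{ij}$ be the $n\times n$ matrix with only nonzero entries $(\Omega_{ij})_{ii}=-m_j$, $(\Omega_{ij})_{ij}=m_j$, $(\Omega_{ij})_{ji}=m_i$, $(\Omega_{ij})_{jj}=-m_i$. A polynomial solution of the KZ system over $\mathbb{F}_p$ is $I\in\mathbb{F}_p[z_1,\dots,z_n]^n$ with $\partial I/\partial z_i=q^{-1}\sum_{j\ne i}\Omega_{ij}I/(z_i-z_j)$ for all $i$ and $\sum_im_iI_i=0$. For $j\ne l$, $\Omega^M_{jl}$ is the $n\times n$ matrix over $\mathbb{F}_p$ with only nonzero entries $(\Omega^M_{jl})_{jj}=M_l$, $(\Omega^M_{jl})_{jl}=-M_l$, $(\Omega^M_{jl})_{lj}=-M_j$, $(\Omega^M_{jl})_{ll}=M_j$; $\Omega^M_j=\sum_{l=j+1}^n\Omega^M_{jl}$. Monomials are ordered lexicographically with $z_1>\dots>z_n$, and the $\mathrm{id}$-leading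 term of a nonzero $f\in\mathbb{F}_p[z]^n$ is $az^d$ with $z^d$ the largest monomial with nonzero coefficient $a\in\mathbb{F}_p^n$. *)

(* Defs.v *)
From HB Require Import structures.
From mathcomp Require Import all_boot all_order all_algebra.
From mathcomp Require Import fraction.
From mathcomp Require Export mpoly.
Unset Printing Implicit Defensive.
Import Order.TTheory GRing.Theory Num.Theory.
Local Open Scope ring_scope.

(* Variables z_1,...,z_n are indexed by 'I_n (z_{k+1} <-> index k). *)

Definition Omega (R : pzRingType) (n : nat) (m : 'I_n -> nat) (i j : 'I_n)
  : 'M[R]_n :=
  \matrix_(a, b)
    if (a == i) && (b == i) then - (m j)%:R
    else if (a == i) && (b == j) then (m j)%:R
    else if (a == j) && (b == i) then (m i)%:R
    else if (a == j) && (b == j) then - (m i)%:R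
    else 0.

(* M_i : least positive integer with M_i = - m_i q^{-1} (mod p) *)
Definition Mnat (p q : nat) (n : nat) (m : 'I_n -> nat) (i : 'I_n) : nat :=
  let r := nat_of_ord (- (m i)%:R / q%:R : 'F_p) in
  if r == 0%N then p else r.

Definition OmegaM (p q n : nat) (m : 'I_n -> nat) (j l : 'I_n) : 'M['F_p]_n :=
  let M := Mnat p q n m in
  \matrix_(a, b)
    if (a == j) && (b == j) then (M l)%:R
    else if (a == j) && (b == l) then - (M l)%:R
    else if (a == l) && (b == j) then - (M j)%:R
    else if (a == l) && (b == l) then (M j)%:R
    else 0.

Definition OmegaMj (p q n : nat) (m : 'I_n -> nat) (j : 'I_n) : 'M['F_p]_n :=
  \sum_(l < n | (j < l)%N) OmegaM p q n m j l.

Notation polF p n := {mpoly 'F_p[n]}.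
Notation fracF p n := {fraction {mpoly 'F_p[n]}}.
Notation tofrac := (@FracField.tofrac _).

Definition KZ_solution (p q n : nat) (m : 'I_n -> nat)
  (I : 'cV[polF p n]_n) : Prop :=
  (forall i : 'I_n,
     map_mx (@FracField.tofrac _) (map_mx (mderiv i) I)
     = (q%:R : fracF p n)^-1 *:
         \sum_(j < n | j != i)
           (FracField.tofrac ('X_i - 'X_j))^-1 *:
             (Omega (fracF p n) n m i j *m map_mx (@FracField.tofrac _) I))
  /\ \sum_(i < n) (m i)%:R *: I i 0 = 0.

(* Lexicographic order on monomials with z_1 > ... > z_n:
   d <=lex e iff d = e or at the first index where they differ d < e. *)
Definition mlex_le (n : nat) (d e : 'X_{1..n}) : bool :=
  [forall i : 'I_n,
     [forall j : 'I_n, (j < i)%N ==> (d j == e j)] ==> (d i <= e i)%N].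

Definition id_leading_term (p n : nat) (I : 'cV[polF p n]_n)
  (C : 'cV['F_p]_n) (d : 'X_{1..n}) : Prop :=
  C != 0
  /\ (forall a : 'I_n, C a 0 = (I a 0)@_d)
  /\ (forall (e : 'X_{1..n}) (a : 'I_n), (I a 0)@_e != 0 -> mlex_le n e d).

(* Main.v *)
Require Import Defs.
From HB Require Import structures.
From mathcomp Require Import all_boot all_order all_algebra.
From mathcomp Require Import fraction mpoly.
From mathcomp Require Import zify ring.
Import GRing.Theory.
Set Implicit Arguments. Unset Strict Implicit.
Local Open Scope ring_scope.

Lemma mlexP n (a b : 'X_{1..n}) :
  mlex_le n a b <-> (forall i : 'I_n, (forall j : 'I_n, (j < i)%N -> a j = b j) -> (a i <= b i)%N).
Proof.
split.
- move=> /forallP H i Hp; move/implyP: (H i); apply; apply/forallP => j; apply/implyP => hj.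
  by apply/eqP; apply: Hp.
- move=> H; apply/forallP => i; apply/implyP => /forallP Hp; apply: H => j hj.
  by apply/eqP; move/implyP: (Hp j); apply.
Qed.

Lemma lex_core n (a b D1 D2 : 'X_{1..n}) :
  mlex_le n a D1 -> mlex_le n b D2 -> forall k : nat,
  (forall i : 'I_n, (i < k)%N -> (a i + b i = D1 i + D2 i)%N) ->
  forall i : 'I_n, (i < k)%N -> a i = D1 i /\ b i = D2 i.
Proof.
move=> /mlexP Ha /mlexP Hb; elim=> [|k IH] Hs i Hi; first by [].
have IH' := IH (fun i hi => Hs i (ltnW hi)).
case: (ltnP i k) => hik; first exact: IH'.
have hj : forall j : 'I_n, (j < i)%N -> (j < k)%N by move=> j hj; lia.
have h1 := Ha i (fun j hj' => proj1 (IH' j (hj j hj'))).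
have h2 := Hb i (fun j hj' => proj2 (IH' j (hj j hj'))).
have h3 := Hs i Hi. lia.
Qed.

Lemma lex_addeq n (a b D1 D2 : 'X_{1..n}) :
  mlex_le n a D1 -> mlex_le n b D2 -> (a + b = D1 + D2)%MM -> a = D1 /\ b = D2.
Proof.
move=> Ha Hb E.
have E' : forall i : 'I_n, (i < n)%N -> (a i + b i = D1 i + D2 i)%N by move=> i _; rewrite -!mnmDE E.
have H := @lex_core _ _ _ _ _ Ha Hb _ E'.
by split; apply/mnmP => i; case: (H i (ltn_ord i)).
Qed.

Lemma lex_antisym n (a b : 'X_{1..n}) : mlex_le n a b -> mlex_le n b a -> a = b.
Proof. by move=> h1 h2; case: (@lex_addeq _ _ _ _ _ h1 h2 (addmC a b)). Qed.

Lemma lex_refl n (a : 'X_{1..n}) : mlex_le n a a.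
Proof. by apply/mlexP. Qed.

Lemma lex_add n (a b D1 D2 : 'X_{1..n}) :
  mlex_le n a D1 -> mlex_le n b D2 -> mlex_le n (a + b) (D1 + D2).
Proof.
move=> Ha Hb; apply/mlexP => i Hp.
have E' : forall j : 'I_n, (j < i)%N -> (a j + b j = D1 j + D2 j)%N by move=> j hj; rewrite -!mnmDE Hp.
have H := @lex_core _ _ _ _ _ Ha Hb _ E'.
move/mlexP: Ha => Ha; move/mlexP: Hb => Hb.
rewrite !mnmDE; apply: leq_add.
  by apply: Ha => j hj; case: (H j hj).
by apply: Hb => j hj; case: (H j hj).
Qed.


Definition supb n (R : idomainType) (f : {mpoly R[n]}) (D : 'X_{1..n}) :=
  forall e, f@_e != 0 -> mlex_le n e D.
Definition ltc n (R : idomainType) (f : {mpoly R[n]}) (D : 'X_{1..n}) c :=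
  supb f D /\ f@_D = c.

Lemma supp_mul n (R : idomainType) (f g : {mpoly R[n]}) e :
  (f * g)@_e != 0 -> exists a b, [/\ f@_a != 0, g@_b != 0 & e = (a + b)%MM].
Proof.
rewrite -mcoeff_msupp => /msuppM_le /allpairsP [[a b] [/= ha hb ->]].
by exists a, b; rewrite -!mcoeff_msupp.
Qed.

Lemma supbM n (R : idomainType) (f g : {mpoly R[n]}) D1 D2 :
  supb f D1 -> supb g D2 -> supb (f * g) (D1 + D2).
Proof.
move=> hf hg e /supp_mul [a [b [ha hb ->]]].
exact: lex_add (hf _ ha) (hg _ hb).
Qed.

Lemma mul_zero n (R : idomainType) (f g : {mpoly R[n]}) D1 D2 :
  supb f D1 -> f@_D1 = 0 -> supb g D2 -> (f * g)@_(D1 + D2) = 0.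
Proof.
move=> hf h0 hg; apply/eqP; apply/negP => /negP /supp_mul [a [b [ha hb E]]].
have [E1 _] := @lex_addeq _ _ _ _ _ (hf _ ha) (hg _ hb) (esym E).
by move: ha; rewrite E1 h0 eqxx.
Qed.

Lemma ltcM n (R : idomainType) (f g : {mpoly R[n]}) D1 D2 c1 c2 :
  ltc f D1 c1 -> ltc g D2 c2 -> ltc (f * g) (D1 + D2) (c1 * c2).
Proof.
move=> [hf cf] [hg cg]; split; first exact: supbM.
pose f' := f - c1 *: 'X_[D1].
have hf' : supb f' D1.
  move=> e; rewrite /f' mcoeffB mcoeffZ mcoeffX.
  have [<-|ne] := eqVneq D1 e; first by move=> _; exact: lex_refl.
  by rewrite mulr0 subr0; apply: hf.
have h0 : f'@_D1 = 0 by rewrite /f' mcoeffB mcoeffZ mcoeffX eqxx mulr1 cf subrr.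
have -> : f = c1 *: 'X_[D1] + f' by rewrite /f' addrC subrK.
rewrite mulrDl mcoeffD (mul_zero hf' h0 hg) addr0 -scalerAl mcoeffZ.
by rewrite [X in X@__]mulrC mcoeffMX cg.
Qed.

Lemma ltcZ n (R : idomainType) (f : {mpoly R[n]}) D c k :
  ltc f D c -> ltc (k *: f) D (k * c).
Proof.
move=> [hf cf]; split; last by rewrite mcoeffZ cf.
move=> e; rewrite mcoeffZ => h; apply: hf; by apply: contraNneq h => ->; rewrite mulr0.
Qed.

Lemma ltc1 n (R : idomainType) : ltc (1 : {mpoly R[n]}) 0%MM 1.
Proof.
split; last by rewrite mcoeff1 eqxx.
move=> e; rewrite mcoeff1; case: (eqVneq e 0%MM) => [->|ne]; first by move=> _; exact: lex_refl.
by rewrite eqxx.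
Qed.

Lemma ltcXm n (R : idomainType) (D : 'X_{1..n}) : ltc ('X_[D] : {mpoly R[n]}) D 1.
Proof.
split; last by rewrite mcoeffX eqxx.
move=> e; rewrite mcoeffX; case: (eqVneq D e) => [->|ne]; first by move=> _; exact: lex_refl.
by rewrite eqxx.
Qed.

Lemma UE n (k i : 'I_n) : U_(k)%MM i = (nat_of_ord k == nat_of_ord i) :> nat.
Proof. by rewrite mnm1E. Qed.

Lemma lex_U n (k j : 'I_n) : (j < k)%N -> mlex_le n U_(k) U_(j).
Proof.
move=> hjk; apply/mlexP => i hp; rewrite !UE.
case: (ltnP j i) => hji; last by case: eqP; lia.
have := hp j hji; rewrite !UE eqxx; case: eqP; lia.
Qed.

Lemma ltc_lin n (R : idomainType) (j k : 'I_n) : j != k ->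
  ltc ('X_j - 'X_k : {mpoly R[n]}) (if (k < j)%N then U_(k) else U_(j))%MM
      (if (k < j)%N then -1 else 1).
Proof.
move=> hjk; have hjk' : nat_of_ord j != nat_of_ord k by [].
split.
  move=> e; rewrite mcoeffB !mcoeffX.
  have [->|ne1] := eqVneq e U_(j)%MM.
    by move=> _; case: ifP => h; [exact: lex_U | exact: lex_refl].
  have [->|ne2] := eqVneq e U_(k)%MM.
    move=> _; case: ifP => h; first exact: lex_refl.
    apply: lex_U; move/negbT: h; move: hjk'; rewrite -ltnNge; lia.
  by rewrite subrr eqxx.
rewrite mcoeffB !mcoeffX.
have e1 : (U_(j)%MM == U_(k)%MM :> 'X_{1..n}) = false.
  apply/negP => /eqP /mnmP /(_ j); rewrite !UE eqxx.
  by case: eqP => // h _; move: hjk'; rewrite h eqxx.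
have e2 : (U_(k)%MM == U_(j)%MM :> 'X_{1..n}) = false by rewrite eq_sym e1.
case: ifP => _; rewrite ?e1 ?e2 !eqxx /=; [by rewrite sub0r | by rewrite subr0].
Qed.


Lemma coeff_Xd n (R : idomainType) (j : 'I_n) (f : {mpoly R[n]}) e :
  ('X_j * mderiv j f)@_e = f@_e *+ e j.
Proof.
rewrite mulrC.
case: (posnP (e j)) => h.
  rewrite h mulr0n; apply/eqP; apply/negP => /negP.
  rewrite -mcoeff_msupp (perm_mem (msuppMX _ _)) => /mapP [m' _ E].
  by move: h; rewrite E mnmDE UE eqxx.
have E : e = (U_(j) + (e - U_(j)))%MM.
  by apply/mnmP => i; rewrite mnmDE mnmBE UE; case: (eqVneq (nat_of_ord j) (nat_of_ord i)) => [/val_inj <-|]; lia.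
rewrite [in LHS]E mcoeffMX mcoeff_deriv.
have -> : (e - U_(j) + U_(j))%MM = e by rewrite addmC -E.
by rewrite mnmBE UE eqxx; congr (_ *+ _); lia.
Qed.

Lemma ltc_Xd n (R : idomainType) (j : 'I_n) (f : {mpoly R[n]}) D c :
  ltc f D c -> ltc ('X_j * mderiv j f) D (c *+ D j).
Proof.
move=> [hf cf]; split; last by rewrite coeff_Xd cf.
move=> e; rewrite coeff_Xd => h; apply: hf; by apply: contraNneq h => ->; rewrite mul0rn.
Qed.

Lemma ltc_prod n (R : idomainType) (T : eqType) (r : seq T) (P : pred T) (F : T -> {mpoly R[n]}) :
  (forall k, P k -> exists D c, ltc (F k) D c /\ c != 0) ->
  exists D c, ltc (\prod_(k <- r | P k) F k) D c /\ c != 0.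
Proof.
move=> H; elim: r => [|x r [D [c [h hc]]]].
  by exists 0%MM, 1; rewrite big_nil; split; [exact: ltc1 | exact: oner_neq0].
rewrite big_cons; case: ifP => Px; last by exists D, c.
have [D' [c' [h' hc']]] := H x Px.
exists (D' + D)%MM, (c' * c); split; first exact: ltcM.
exact: mulf_neq0.
Qed.


Lemma Mnat_val p q n (m : 'I_n -> nat) i : prime p ->
  ((Mnat p q n m i)%:R : 'F_p) = - (m i)%:R / q%:R.
Proof.
move=> Hp; rewrite /Mnat; set x := (- (m i)%:R / q%:R : 'F_p).
case: eqP => h.
  by rewrite pchar_Fp_0 //; apply/val_inj; exact: (esym h).
apply: val_inj => /=; rewrite val_Fp_nat // modn_small //.
by move: (ltn_ord x); rewrite [in X in (_ < X)%N -> _]Fp_cast.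
Qed.

Lemma OmegaM_eq p q n (m : 'I_n -> nat) j l : prime p ->
  OmegaM p q n m j l = (q%:R : 'F_p)^-1 *: Omega 'F_p n m j l.
Proof.
move=> Hp; apply/matrixP => a b; rewrite !mxE /=; rewrite !(Mnat_val _ _ _ Hp).
by repeat (case: ifP => _); rewrite ?mulr0 //; ring.
Qed.

Lemma Omega_map (R S : comNzRingType) (f : {rmorphism R -> S}) n (m : 'I_n -> nat) i j :
  map_mx f (Omega R n m i j) = Omega S n m i j.
Proof.
apply/matrixP => a b; rewrite !mxE.
by repeat (case: ifP => _); rewrite ?rmorphN ?rmorph_nat ?rmorph0.
Qed.

Lemma lex_contra n (l j : 'I_n) (Y : 'X_{1..n}) : (l < j)%N ->
  ~~ mlex_le n (U_(l) + Y)%MM (U_(j) + Y)%MM.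
Proof.
move=> hlj; apply/negP => /mlexP H.
have := H l; rewrite !mnmDE !UE eqxx.
have -> : (nat_of_ord j == nat_of_ord l) = false by apply/negbTE; lia.
move=> /(_ _) h; have : (1 + Y l <= 0 + Y l)%N.
  apply: h => i hi; rewrite !mnmDE !UE.
  have -> : (nat_of_ord j == nat_of_ord i) = false by apply/negbTE; lia.
  have -> : (nat_of_ord l == nat_of_ord i) = false by apply/negbTE; lia.
  by [].
lia.
Qed.

Lemma ltc_uniq n (R : idomainType) (f : {mpoly R[n]}) D c D' c' :
  ltc f D c -> c != 0 -> ltc f D' c' -> c' != 0 -> D = D' /\ c = c'.
Proof.
move=> [h1 e1] c0 [h2 e2] c0'.
have l1 : mlex_le n D D' by apply: h2; rewrite e1.
have l2 : mlex_le n D' D by apply: h1; rewrite e2.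
have E := lex_antisym l1 l2.
by split => //; rewrite -e1 -e2 E.
Qed.



Lemma key (p q n : nat) (m : 'I_n -> nat) (Hp : prime p) (Hq0 : (0 < q)%N) (Hqp : (q < p)%N)
  (I : 'cV[{mpoly 'F_p[n]}]_n) (C : 'cV['F_p]_n) (d : 'X_{1..n}) :
  KZ_solution p q n m I -> id_leading_term p n I C d ->
  forall j : 'I_n, OmegaMj p q n m j *m C = (d j)%:R *: C.
Proof.
move=> [KZ1 _] [C0 [HC Hsupp]] j.
have Hj := KZ1 j.
pose Om l := Omega 'F_p n m j l.
have OmF : forall l, Omega {fraction {mpoly 'F_p[n]}} n m j l
    = map_mx Defs.tofrac (map_mx (@mpolyC n 'F_p) (Om l)).
  by move=> l; rewrite !Omega_map.
pose Y l a := ((map_mx (@mpolyC n 'F_p) (Om l)) *m I) a 0.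
have qF : (q%:R : 'F_p) != 0.
  by rewrite -(dvdn_pcharf (pchar_Fp Hp)) gtnNdvd.
have qFr : (q%:R : {fraction {mpoly 'F_p[n]}}) != 0.
  by rewrite -(rmorph_nat Defs.tofrac) tofrac_eq0 -(rmorph_nat (@mpolyC n 'F_p)) mpolyC_eq0.
have Ea : forall a : 'I_n, Defs.tofrac (mderiv j (I a 0)) =
   (q%:R)^-1 * \sum_(l < n | l != j) (Defs.tofrac ('X_j - 'X_l))^-1 * Defs.tofrac (Y l a).
  move=> a; move/matrixP: Hj => /(_ a 0).
  rewrite !mxE summxE => ->; congr (_ * _); apply: eq_bigr => l _.
  by rewrite OmF -map_mxM [LHS]mxE [X in _ * X]mxE.
pose Pj := \prod_(l < n | l != j) ('X_j - 'X_l : {mpoly 'F_p[n]}).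
pose Pl l := \prod_(k < n | (k != j) && (k != l)) ('X_j - 'X_k : {mpoly 'F_p[n]}).
have hPl : forall l, l != j -> Pj = ('X_j - 'X_l) * Pl l.
  by move=> l hl; rewrite /Pj (bigD1 l).
have pm1 : forall b : bool, (if b then -1 else 1 : 'F_p) != 0.
  by move=> b; case: b; rewrite ?oppr_eq0 oner_eq0.
have Xnz : forall l, l != j -> ('X_j - 'X_l : {mpoly 'F_p[n]}) != 0.
  move=> l hl; apply/eqP => E.
  have hjl : j != l by rewrite eq_sym.
  have [_ c] := @ltc_lin n 'F_p j l hjl.
  by move: c (pm1 (l < j)%N); rewrite E mcoeff0 => <-; rewrite eqxx.
have PE : forall a, (q%:R : {mpoly 'F_p[n]}) * mderiv j (I a 0) * Pj
    = \sum_(l < n | l != j) Pl l * Y l a.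
  move=> a; apply/eqP; rewrite -tofrac_eq; apply/eqP.
  have tq : Defs.tofrac (q%:R : {mpoly 'F_p[n]}) = q%:R by rewrite rmorph_nat.
  rewrite !tofracM Ea tq mulrA mulfV // mul1r.
  have -> : Defs.tofrac (\sum_(l < n | l != j) Pl l * Y l a) =
    \sum_(l < n | l != j) Defs.tofrac (Pl l * Y l a) by rewrite rmorph_sum.
  rewrite mulr_suml.
  apply: eq_bigr => l hl; rewrite (hPl l hl) !tofracM.
  set x := Defs.tofrac _.
  have xnz : x != 0 by rewrite tofrac_eq0 Xnz.
  transitivity ((x^-1 * x) * (Defs.tofrac (Pl l) * Defs.tofrac (Y l a))); first ring.
  by rewrite mulVf // mul1r.
have PE2 : forall a, ((q%:R : 'F_p) *: ('X_j * mderiv j (I a 0))) * Pj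
    = \sum_(l < n | l != j) ('X_j * Pl l) * Y l a.
  move=> a; transitivity ('X_j * ((q%:R : {mpoly 'F_p[n]}) * mderiv j (I a 0) * Pj)).
    by rewrite -mul_mpolyC rmorph_nat; ring.
  by rewrite PE mulr_sumr; apply: eq_bigr => l _; ring.
have [D [s [hP hs]]] : exists D s, ltc Pj D s /\ s != 0.
  apply: ltc_prod => l hl.
  have hjl : j != l by rewrite eq_sym.
  by exists (if (l < j)%N then U_(l) else U_(j))%MM, (if (l < j)%N then -1 else 1); split;
    [exact: ltc_lin | exact: pm1].
have hI : forall a, ltc (I a 0) d (C a 0).
  by move=> a; split; [move=> e; exact: Hsupp | rewrite HC].
have Yc : forall l a e, (Y l a)@_e = \sum_b Om l a b * (I b 0)@_e.
  move=> l a e; rewrite /Y mxE raddf_sum; apply: eq_bigr => b _.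
  by rewrite mxE; exact: mcoeffCM.
have hY : forall l a, ltc (Y l a) d ((Om l *m C) a 0).
  move=> l a; split.
    move=> e; rewrite Yc => h.
    case: (boolP [exists b, (I b 0)@_e != 0]) => [/existsP [b hb]|/existsPn hn].
      exact: Hsupp hb.
    move: h; rewrite big1 ?eqxx // => b _; move: (hn b); rewrite negbK => /eqP ->.
    by rewrite mulr0.
  by rewrite Yc mxE; apply: eq_bigr => b _; rewrite HC.
have term : forall a l, l != j ->
    (('X_j * Pl l) * Y l a)@_(d + D) = if (j < l)%N then s * (Om l *m C) a 0 else 0.
  move=> a l hl.
  have hjl : j != l by rewrite eq_sym.
  have [Dl [sl [hPl' hsl]]] : exists Dl sl, ltc (Pl l) Dl sl /\ sl != 0.
    apply: ltc_prod => k /andP [hk1 hk2].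
    have hjk : j != k by rewrite eq_sym.
    by exists (if (k < j)%N then U_(k) else U_(j))%MM, (if (k < j)%N then -1 else 1); split;
      [exact: ltc_lin | exact: pm1].
  have h1 := ltcM (@ltc_lin n 'F_p j l hjl) hPl'.
  rewrite -hPl // in h1.
  have [ED Es] := ltc_uniq hP hs h1 (mulf_neq0 (pm1 _) hsl).
  have h2 := ltcM (ltcM (@ltcXm n 'F_p U_(j)) hPl') (hY l a).
  case hlj: (l < j)%N in ED Es.
    have -> : (j < l)%N = false by apply/negbTE; lia.
    apply/eqP; apply/negP => /negP hnz.
    have := h2.1 _ hnz.
    have -> : (d + D = U_(l) + (Dl + d))%MM by rewrite ED; apply/mnmP => i; rewrite !mnmDE; lia.
    rewrite -addmA; apply/negP; exact: lex_contra.
  have -> : (j < l)%N = true.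
    move: hlj hl; rewrite -val_eqE /=; lia.
  rewrite addmC ED h2.2 Es; ring.
have Eq : forall a, \sum_(l < n | (j < l)%N) (Om l *m C) a 0 = q%:R * (C a 0 *+ d j).
  move=> a; apply: (mulfI hs).
  have L := ltcM (ltcZ (q%:R : 'F_p) (ltc_Xd j (hI a))) hP.
  rewrite [RHS]mulrC -L.2 PE2 raddf_sum.
  rewrite [in RHS](eq_bigr (fun l : 'I_n => if (j < l)%N then s * (Om l *m C) a 0 else 0)); last first.
    by move=> l hl; exact: term.
  rewrite mulr_sumr big_mkcond [RHS]big_mkcond; apply: eq_bigr => l _ /=.
  case: (eqVneq l j) => [->|hl] /=; first by rewrite ltnn.
  by case: ifP.
apply/matrixP => a b; rewrite (ord1 b) {b}.
rewrite /OmegaMj mulmx_suml summxE [RHS]mxE.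
under eq_bigr => l _ do rewrite OmegaM_eq // -scalemxAl mxE.
by rewrite -mulr_sumr Eq mulrA mulVf // mul1r mulr_natl.
Qed.

Theorem corollary5p2 (p q n : nat) (m : 'I_n -> nat)
  (Hp : prime p) (Hq : prime q) (Hn : (2 <= n)%N) (Hpn : (n < p)%N)
  (Hpq : (q < p)%N) (Hm : forall i, (0 < m i < q)%N)
  (I : 'cV[{mpoly 'F_p[n]}]_n) (C : 'cV['F_p]_n) (d : 'X_{1..n}) :
  I != 0 -> KZ_solution p q n m I -> id_leading_term p n I C d ->
  \sum_(j < n) (Mnat p q n m j)%:R * C j 0 = 0
  /\ (forall j : 'I_n, (j < n.-1)%N -> OmegaMj p q n m j *m C = (d j)%:R *: C)
  /\ (forall jn : 'I_n, nat_of_ord jn = n.-1 -> (p %| d jn)%N).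
Proof.
move=> _ KZ LT.
have Hq0 : (0 < q)%N by exact: prime_gt0.
have qF : (q%:R : 'F_p) != 0.
  by rewrite -(dvdn_pcharf (pchar_Fp Hp)) gtnNdvd.
have K := key Hp Hq0 Hpq KZ LT.
have [_ Hsum] := KZ; have [C0 [HC _]] := LT.
split.
  have : (\sum_(i < n) (m i)%:R *: I i 0)@_d = 0 by rewrite Hsum mcoeff0.
  rewrite raddf_sum => H.
  have H' : \sum_(i < n) (m i)%:R * C i 0 = 0.
    by rewrite -[RHS]H; apply: eq_bigr => i _; rewrite HC; symmetry; exact: mcoeffZ.
  rewrite (eq_bigr (fun i : 'I_n => - (q%:R)^-1 * ((m i)%:R * C i 0))).
    by rewrite -mulr_sumr H' mulr0.
  by move=> i _; rewrite Mnat_val //; ring.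
split; first by move=> j _; exact: K.
move=> jn hjn; have := K jn.
rewrite /OmegaMj big1 ?mul0mx; last first.
  move=> l hl; have := ltn_ord l; lia.
move/esym/eqP; rewrite scaler_eq0 (negbTE C0) orbF.
by rewrite -(dvdn_pcharf (pchar_Fp Hp)).
Qed.
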